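(* In the setting of the context, assume $(n_k)$ is a stabilizing subsequence with limit parameters $(\pi_m)$, $(\eta_{m,j})$. Then for each integer $j\ge1$, the distribution under $\nu$ of $f^{(jq_{n_k})}-jh_{n_k+1}$ (which equals $g_{n_k+1}^{(j,S^{q_{n_k}})}$) converges weakly, as a probability on $\mathbb Z$, to $P_j$ as $k\to\infty$.
   Context: Odometer: integers $p_n\ge2$, $q_0=1$, $q_n=p_1\cdots p_n$; $Y=\prod_{n\ge1}\{0,\dots,p_n-1\}$ with product of uniform measures $\nu$; $S$ adds $(1,0,0,\dots)$ with carry to the right. $D^{(n)}_0=\{y:y_1=\dots=y_n=0\}$, $D^{(n)}_i=S^iD^{(n)}_0$ ($0\le i<q_n$), $\mathcal D_n$ the partition into these sets. Morse-type function: $f=1+\sum_{n\ge1}s_n$, integrable, where $s_n:Y\to\{0,1,2,\dots\}$ is $\mathcal D_n$-measurable and (for $n\ge2$) vanishes outside $D^{(n-1)}_{q_{n-1}-1}$; $s_{n,j}$ ($0\le j\le p_n-1$) denotes the value of $s_n$ on $D^{(n)}_{(j+1)q_{n-1}-1}$. $h_1=1$, $h_{n+1}=p_nh_n+\sum_js_{n,j}$. For $g:Y\to\mathbb Z$, $g^{(m)}=g^{(m,S)}=\sum_{i=0}^{m-1}g\circ S^i$, and $g^{(j,S^{q})}=\sum_{i=0}^{j-1}g\circ S^{iq}$. $f_{n+1}=\sum_{m\ge n+1}s_m$, and $g_{n+1}(y)=f_{n+1}(S^iy)$ with $0\le i<q_n$ the unique index such that $S^iy\in D^{(n)}_{q_n-1}$.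 Stabilizing subsequence: increasing $(n_k)$ with $p_{n_k+m}\to\pi_m$ and $s_{n_k+m,j}\to\eta_{m,j}$ for all $m\in\mathbb Z$, $0\le j\le\pi_m-1$. Limit model: $\overline Y=\prod_{m\ge1}\{0,\dots,\pi_m-1\}$ with product uniform measure $\overline\nu$ and odometer $\overline S$ (add $1$ to first coordinate with carry to the right); $\gamma(\overline y)=\sum_{m=1}^{\overline t(\overline y)}\eta_{m,\overline y_m}$, where $\overline t(\overline y)$ is the smallest $t\ge1$ with $\overline y_t<\pi_t-1$; $P_j$ is the distribution under $\overline\nu$ of $\gamma+\gamma\circ\overline S+\dots+\gamma\circ\overline S^{j-1}$. *)

(* Defs.v *)
From Stdlib Require Import Reals ZArith Arith List.
Import ListNotations.
Open Scope R_scope.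

(* Points of Y = prod_{n>=1} {0,..,p_n - 1} are sequences y : nat -> nat;
   coordinate 0 is unused, coordinates are y 1, y 2, ... *)

Fixpoint rsum (n : nat) (g : nat -> R) : R :=
  match n with O => 0 | S n' => rsum n' g + g n' end.

Definition nsum (lo len : nat) (g : nat -> nat) : nat :=
  fold_right Nat.add 0%nat (map g (seq lo len)).

Definition all_max (p : nat -> nat) (y : nat -> nat) (k : nat) : bool :=
  forallb (fun i => Nat.eqb (y i) (p i - 1)) (seq 1 (k - 1)).

(* The odometer S: add 1 to the first coordinate with carry to the right.
   Coordinate k (k>=1) receives a carry iff all coordinates 1..k-1 are maximal. *)
Definition odo (p : nat -> nat) (y : nat -> nat) : nat -> nat :=
  fun k => if Nat.eqb k 0 then y k
           else if all_max p y k then ((y k + 1) mod (p k))%nat else y k.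

Definition birkhoff (T : (nat -> nat) -> (nat -> nat)) (g : (nat -> nat) -> nat)
  (L : nat) (y : nat -> nat) : nat :=
  nsum 0 L (fun i => g (Nat.iter i T y)).

Fixpoint q (p : nat -> nat) (n : nat) : nat :=
  match n with O => 1%nat | S n' => (q p n' * p n)%nat end.

(* The D_m-measurable function s_m vanishing outside D^{(m-1)}_{q_{m-1}-1},
   with value s m j on D^{(m)}_{(j+1)q_{m-1}-1} = {y_1..y_{m-1} maximal, y_m = j}. *)
Definition smorse (p : nat -> nat) (s : nat -> nat -> nat) (m : nat)
  (y : nat -> nat) : nat :=
  if all_max p y m then s m (y m) else 0%nat.

(* Truncation f_N = 1 + sum_{m=1}^N s_m  (f_N increases to f) *)
Definition f_trunc (p : nat -> nat) (s : nat -> nat -> nat) (N : nat)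
  (y : nat -> nat) : nat :=
  (1 + nsum 1 N (fun m => smorse p s m y))%nat.

(* hh n = h_{n+1}:  h_1 = 1, h_{n+1} = p_n h_n + sum_j s_{n,j} *)
Fixpoint hh (p : nat -> nat) (s : nat -> nat -> nat) (n : nat) : nat :=
  match n with
  | O => 1%nat
  | S n' => (p n * hh p s n' + nsum 0 (p n) (s n))%nat
  end.

Definition upd (y : nat -> nat) (k a : nat) : nat -> nat :=
  fun i => if Nat.eqb i k then a else y i.

(* Integral w.r.t. the uniform product measure over coordinates 1..N of a
   function depending only on those coordinates. *)
Fixpoint avg (p : nat -> nat) (N : nat) (F : (nat -> nat) -> R) : R :=
  match N with
  | O => F (fun _ => 0%nat)
  | S N' => avg p N' (fun y => / INR (p N) * rsum (p N) (fun a => F (upd y N a)))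
  end.

Definition prob (p : nat -> nat) (N : nat) (E : (nat -> nat) -> bool) : R :=
  avg p N (fun y => if E y then 1 else 0).

(* Truncation at level N of  f^{(j q_n)} - j h_{n+1} *)
Definition X_trunc (p : nat -> nat) (s : nat -> nat -> nat) (n j N : nat)
  (y : nat -> nat) : Z :=
  (Z.of_nat (birkhoff (odo p) (f_trunc p s N) (j * q p n) y)
   - Z.of_nat (j * hh p s n))%Z.

Definition pibar (pi : Z -> nat) : nat -> nat := fun m => pi (Z.of_nat m).
Definition etabar (eta : Z -> nat -> nat) : nat -> nat -> nat :=
  fun m a => eta (Z.of_nat m) a.

(* gamma_N = sum_{m=1}^{min(tbar,N)} eta_{m, ybar_m}, increasing to gamma *)
Definition gamma_trunc (pi : Z -> nat) (eta : Z -> nat -> nat) (N : nat)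
  (y : nat -> nat) : nat :=
  nsum 1 N (fun m => smorse (pibar pi) (etabar eta) m y).

(* Truncation of gamma + gamma o Sbar + ... + gamma o Sbar^{j-1} *)
Definition Gamma_trunc (pi : Z -> nat) (eta : Z -> nat -> nat) (j N : nat)
  (y : nat -> nat) : Z :=
  Z.of_nat (birkhoff (odo (pibar pi)) (gamma_trunc pi eta N) j y).

(* Main.v *)
Require Import Defs.
From Stdlib Require Import Reals ZArith Arith List.
Open Scope R_scope.
From Stdlib Require Import Lia Lra FunctionalExtensionality ClassicalEpsilon.

Section PartA.
Open Scope R_scope.

Local Open Scope nat_scope.
Lemma nsum_0 lo g : nsum lo 0 g = 0%nat.
Proof. reflexivity. Qed.

Lemma nsum_S_l lo len g : nsum lo (S len) g = (g lo + nsum (S lo) len g)%nat.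
Proof. reflexivity. Qed.

Lemma nsum_S_r lo len g : nsum lo (S len) g = (nsum lo len g + g (lo + len))%nat.
Proof.
  unfold nsum. rewrite seq_S, map_app, fold_right_app. simpl.
  generalize (g (lo+len)). induction (map g (seq lo len)); intros; simpl; try lia.
  rewrite IHl. lia.
Qed.

Lemma nsum_ext lo len g h : (forall i, (lo <= i < lo + len)%nat -> g i = h i) ->
  nsum lo len g = nsum lo len h.
Proof.
  revert lo. induction len; intros lo H; auto.
  rewrite !nsum_S_l. rewrite (H lo) by lia. rewrite (IHlen (S lo)); auto.
  intros; apply H; lia.
Qed.

Lemma nsum_shift lo len g : nsum (S lo) len g = nsum lo len (fun m => g (S m)).
Proof.
  revert lo. induction len; intros; auto. rewrite !nsum_S_l, IHlen. reflexivity.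
Qed.

Lemma nsum_add lo len g h : nsum lo len (fun i => g i + h i)%nat = (nsum lo len g + nsum lo len h)%nat.
Proof. revert lo; induction len; intros; auto. rewrite !nsum_S_l, IHlen. lia. Qed.

Lemma nsum_const lo len c : nsum lo len (fun _ => c) = (len * c)%nat.
Proof. revert lo; induction len; intros; auto. rewrite nsum_S_l, IHlen. lia. Qed.

Lemma nsum_app lo a b g : nsum lo (a + b) g = (nsum lo a g + nsum (lo + a) b g)%nat.
Proof.
  revert lo; induction a; intros; simpl. rewrite Nat.add_0_r; auto.
  rewrite !nsum_S_l, IHa. replace (S lo + a)%nat with (lo + S a)%nat by lia. lia.
Qed.

Lemma nsum_single p r0 h : (r0 < p)%nat -> (forall r, (r < p)%nat -> r <> r0 -> h r = 0%nat) ->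
  nsum 0 p h = h r0.
Proof.
  induction p; intros Hr H; [lia|]. rewrite nsum_S_r. simpl.
  destruct (Nat.eq_dec r0 p).
  - subst r0. rewrite (nsum_ext 0 p h (fun _ => 0%nat)). rewrite nsum_const. lia.
    intros; apply H; lia.
  - rewrite IHp by (try lia; intros; apply H; lia). rewrite (H p) by lia. lia.
Qed.

Lemma nsum_rot p c g : nsum 0 p (fun r => g ((c + r) mod p)%nat) = nsum 0 p g.
Proof.
  destruct p as [|p']; [reflexivity|]. set (p := S p').
  induction c.
  - apply nsum_ext. intros i Hi. rewrite Nat.add_0_l. rewrite Nat.mod_small; auto. unfold p in *; lia.
  - set (h := fun r => g ((c + r) mod p)%nat) in *.
    assert (E1 : nsum 0 (S p) h = (h 0%nat + nsum 0 p (fun r => h (S r)))%nat).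
    { rewrite nsum_S_l, nsum_shift. reflexivity. }
    rewrite nsum_S_r in E1. simpl in E1.
    assert (h p = h 0%nat).
    { unfold h. f_equal. rewrite Nat.add_0_r.
      replace (c+p)%nat with (c + 1*p)%nat by lia. rewrite Nat.Div0.mod_add. auto. }
    rewrite (nsum_ext 0 p (fun r => g ((S c + r) mod p)%nat) (fun r => h (S r))).
    lia. intros; unfold h. f_equal. f_equal. lia.
Qed.

Local Open Scope R_scope.
Lemma rsum_S n g : rsum (S n) g = rsum n g + g n.
Proof. reflexivity. Qed.

Lemma rsum_front n g : rsum (S n) g = g 0%nat + rsum n (fun i => g (S i)).
Proof. induction n; simpl in *. lra. rewrite IHn. lra. Qed.

Lemma rsum_ext n g h : (forall i, (i < n)%nat -> g i = h i) -> rsum n g = rsum n h.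
Proof. induction n; intros H; simpl; auto. rewrite IHn by (intros; apply H; lia). rewrite H by lia. reflexivity. Qed.

Lemma rsum_lin n a b g h : rsum n (fun i => a * g i + b * h i) = a * rsum n g + b * rsum n h.
Proof. induction n; simpl. lra. rewrite IHn. lra. Qed.

Lemma rsum_const n c : rsum n (fun _ => c) = INR n * c.
Proof. induction n. simpl; lra. change (rsum (S n) (fun _ => c)) with (rsum n (fun _ => c) + c). rewrite IHn, S_INR. lra. Qed.

Lemma rsum_le n g h : (forall i, (i < n)%nat -> g i <= h i) -> rsum n g <= rsum n h.
Proof. induction n; intros H; simpl. lra. apply Rplus_le_compat. apply IHn; intros; apply H; lia. apply H; lia. Qed.

Lemma rsum_ge_term n g i : (forall k, (k < n)%nat -> 0 <= g k) -> (i < n)%nat -> g i <= rsum n g.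
Proof.
  induction n; intros H Hi; [lia|]. simpl.
  assert (0 <= rsum n g). { clear -H. induction n; simpl. lra. assert (0 <= g n) by (apply H; lia).
    assert (0 <= rsum n g) by (apply IHn; intros; apply H; lia). lra. }
  destruct (Nat.eq_dec i n). subst. lra. assert (g i <= rsum n g) by (apply IHn; try lia; intros; apply H; lia).
  assert (0 <= g n) by (apply H; lia). lra.
Qed.

Lemma rsum_rot1 p g : rsum p (fun a => g ((a + 1) mod p)%nat) = rsum p g.
Proof.
  destruct p as [|p']; [reflexivity|].
  rewrite rsum_S, (rsum_front p' g).
  replace ((p' + 1) mod S p')%nat with 0%nat.
  2:{ replace (p'+1)%nat with (0 + 1 * S p')%nat by lia. rewrite Nat.Div0.mod_add, Nat.Div0.mod_0_l. reflexivity. }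
  rewrite (rsum_ext p' _ (fun i => g (S i))). lra.
  intros i Hi. f_equal. rewrite Nat.mod_small; lia.
Qed.

End PartA.

Section PartC.
Local Open Scope nat_scope.

Lemma all_max_spec p y k : all_max p y k = true <-> (forall i, 1 <= i < k -> y i = p i - 1).
Proof.
  unfold all_max. rewrite forallb_forall. split.
  - intros H i Hi. apply Nat.eqb_eq. apply H. apply in_seq. lia.
  - intros H x Hx. apply in_seq in Hx. apply Nat.eqb_eq. apply H. lia.
Qed.

Lemma all_max_1 p y : all_max p y 1 = true.
Proof. reflexivity. Qed.

Lemma bool_iff (a b : bool) : (a = true <-> b = true) -> a = b.
Proof. destruct a, b; intuition; try discriminate. Qed.

Definition sh1 (y : nat -> nat) : nat -> nat := fun m => if Nat.eqb m 0 then 0 else y (S m).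
Definition shiftf {A} (f : nat -> A) (n : nat) : nat -> A := fun m => f (n + m).
Fixpoint shY (n : nat) (y : nat -> nat) : nat -> nat :=
  match n with O => y | S n' => shY n' (sh1 y) end.

Lemma all_max_SS p y m : all_max p y (S (S m)) =
  (Nat.eqb (y 1) (p 1 - 1) && all_max (shiftf p 1) (sh1 y) (S m))%bool.
Proof.
  apply bool_iff. rewrite Bool.andb_true_iff, !all_max_spec, Nat.eqb_eq. split.
  - intros H. split. apply H; lia. intros i Hi. unfold sh1, shiftf.
    destruct i; [lia|]. simpl. apply H. lia.
  - intros [H1 H] i Hi. destruct (Nat.eq_dec i 1). subst; auto.
    destruct i as [|i]; [lia|]. specialize (H i ltac:(lia)). unfold sh1, shiftf in H.
    destruct i; [lia|]. simpl in H. auto.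
Qed.

Lemma all_max_mono p y k k' : k <= k' -> all_max p y k' = true -> all_max p y k = true.
Proof. rewrite !all_max_spec. intros H1 H i Hi. apply H; lia. Qed.

Lemma all_max_last p y k : 1 <= k -> all_max p y (S k) = (all_max p y k && Nat.eqb (y k) (p k - 1))%bool.
Proof.
  intros Hk. apply bool_iff. rewrite Bool.andb_true_iff, !all_max_spec, Nat.eqb_eq. split.
  - intros H. split. intros; apply H; lia. apply H; lia.
  - intros [H1 H2] i Hi. destruct (Nat.eq_dec i k). subst; auto. apply H1; lia.
Qed.

Lemma odo_0 p y : odo p y 0 = y 0.
Proof. reflexivity. Qed.

Lemma odo_1 p y : odo p y 1 = (y 1 + 1) mod p 1.
Proof. reflexivity. Qed.

Lemma iter_0 p r y : Nat.iter r (odo p) y 0 = y 0.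
Proof. induction r; simpl; auto. Qed.

Lemma odo_nocarry p y : y 1 <> p 1 - 1 -> sh1 (odo p y) = sh1 y.
Proof.
  intros H. apply functional_extensionality. intros m. unfold sh1.
  destruct (Nat.eqb_spec m 0); auto. unfold odo. simpl.
  destruct (all_max p y (S m)) eqn:E; auto. apply all_max_spec with (i:=1) in E; lia.
Qed.

Lemma odo_carry p y : y 1 = p 1 - 1 -> sh1 (odo p y) = odo (shiftf p 1) (sh1 y).
Proof.
  intros H. apply functional_extensionality. intros m. unfold sh1.
  destruct m as [|m]; simpl. reflexivity.
  unfold odo. simpl. destruct m as [|m].
  - rewrite all_max_SS. rewrite (proj2 (Nat.eqb_eq _ _) H). simpl. reflexivity.
  - rewrite all_max_SS. rewrite (proj2 (Nat.eqb_eq _ _) H). simpl. reflexivity.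
Qed.

Lemma iter_1 p y r : 1 <= p 1 -> y 1 < p 1 -> Nat.iter r (odo p) y 1 = (y 1 + r) mod p 1.
Proof.
  intros Hp Hy. induction r.
  - simpl. rewrite Nat.add_0_r, Nat.mod_small; auto.
  - simpl Nat.iter. rewrite odo_1, IHr. rewrite Nat.Div0.add_mod_idemp_l. f_equal. lia.
Qed.

Lemma iter_sh_stable p x t : (forall r, r < t -> Nat.iter r (odo p) x 1 <> p 1 - 1) ->
  sh1 (Nat.iter t (odo p) x) = sh1 x.
Proof.
  induction t; intros H; simpl; auto. rewrite odo_nocarry. apply IHt. intros; apply H; lia.
  apply H; lia.
Qed.

Lemma iter_comp p a b x : Nat.iter a (odo p) (Nat.iter b (odo p) x) = Nat.iter (a + b) (odo p) x.
Proof. rewrite Nat.iter_add. reflexivity. Qed.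

Section Block.
Variable p : nat -> nat.
Variable y : nat -> nat.
Hypothesis Hp : 1 <= p 1.
Hypothesis Hy : y 1 < p 1.

Lemma block_pre : forall r, r <= p 1 - 1 - y 1 -> sh1 (Nat.iter r (odo p) y) = sh1 y.
Proof.
  intros r Hr. apply iter_sh_stable. intros r' Hr'. rewrite iter_1 by auto.
  rewrite Nat.mod_small; lia.
Qed.

Lemma block_end1 : Nat.iter (p 1) (odo p) y 1 = y 1.
Proof.
  rewrite iter_1 by auto. replace (y 1 + p 1) with (y 1 + 1 * p 1) by lia.
  rewrite Nat.Div0.mod_add, Nat.mod_small; auto.
Qed.

Lemma block_end_sh : sh1 (Nat.iter (p 1) (odo p) y) = odo (shiftf p 1) (sh1 y).
Proof.
  set (r0 := p 1 - 1 - y 1).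
  replace (p 1) with (y 1 + S r0) by (unfold r0; lia).
  rewrite <- iter_comp. rewrite iter_sh_stable.
  - simpl. rewrite odo_carry. rewrite block_pre; auto.
    rewrite iter_1 by auto. rewrite Nat.mod_small; unfold r0; lia.
  - intros r Hr. rewrite iter_comp. rewrite iter_1 by auto.
    replace (y 1 + (r + S r0)) with (r + 1 * p 1) by (unfold r0; lia).
    rewrite Nat.Div0.mod_add, Nat.mod_small; lia.
Qed.
End Block.

End PartC.

Section PartD.
Local Open Scope nat_scope.

Definition gam_f (P : nat -> nat) (S : nat -> nat -> nat) (M : nat) (x : nat -> nat) : nat :=
  nsum 1 M (fun m => smorse P S m x).
Definition Gam P S j M b := birkhoff (odo P) (gam_f P S M) j b.

Lemma nsum_shift0 lo len g : nsum lo len g = nsum 0 len (fun i => g (lo + i)).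
Proof.
  revert g; induction lo; intros; auto. rewrite nsum_shift, IHlo. reflexivity.
Qed.

Lemma birk_add T g a b y : birkhoff T g (a + b) y = birkhoff T g a y + birkhoff T g b (Nat.iter a T y).
Proof.
  unfold birkhoff. rewrite nsum_app. f_equal. rewrite nsum_shift0. simpl.
  apply nsum_ext. intros i _. f_equal. rewrite Nat.add_comm, Nat.iter_add. reflexivity.
Qed.

Lemma birk_S T g L y : birkhoff T g (S L) y = g y + birkhoff T g L (T y).
Proof. change (S L) with (1 + L). rewrite (birk_add T g 1 L y). f_equal. unfold birkhoff, nsum. simpl. lia. Qed.

Lemma birk_ext T g h L y : (forall x, g x = h x) -> birkhoff T g L y = birkhoff T h L y.
Proof. intros H. unfold birkhoff. apply nsum_ext. intros; auto. Qed.

Lemma birk_f_trunc T P S M j b : birkhoff T (f_trunc P S M) j b = j + birkhoff T (gam_f P S M) j b.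
Proof.
  unfold birkhoff. rewrite (nsum_ext 0 j _ (fun i => 1 + gam_f P S M (Nat.iter i T b))) by reflexivity.
  rewrite (nsum_add 0 j (fun _ => 1) (fun i => gam_f P S M (Nat.iter i T b))).
  rewrite nsum_const. lia.
Qed.

Lemma f_split p s N x : f_trunc p s (S N) x =
  1 + s 1 (x 1) + (if Nat.eqb (x 1) (p 1 - 1) then gam_f (shiftf p 1) (shiftf s 1) N (sh1 x) else 0).
Proof.
  unfold f_trunc, gam_f. rewrite nsum_S_l. rewrite nsum_shift.
  replace (smorse p s 1 x) with (s 1 (x 1)) by reflexivity.
  destruct (Nat.eqb (x 1) (p 1 - 1)) eqn:E.
  - rewrite (nsum_ext 1 N _ (fun m => smorse (shiftf p 1) (shiftf s 1) m (sh1 x))). lia.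
    intros m Hm. destruct m as [|m]; [lia|]. unfold smorse. rewrite all_max_SS, E. simpl. reflexivity.
  - rewrite (nsum_ext 1 N _ (fun _ => 0)). rewrite nsum_const. lia.
    intros m Hm. destruct m as [|m]; [lia|]. unfold smorse. rewrite all_max_SS, E. simpl. reflexivity.
Qed.

Lemma block_sum p s N y : 1 <= p 1 -> y 1 < p 1 ->
  nsum 0 (p 1) (fun r => f_trunc p s (S N) (Nat.iter r (odo p) y)) =
  (p 1 - 1 + nsum 0 (p 1) (s 1)) + f_trunc (shiftf p 1) (shiftf s 1) N (sh1 y).
Proof.
  intros Hp Hy.
  rewrite (nsum_ext 0 (p 1) _ (fun r => (1 + s 1 ((y 1 + r) mod p 1)) +
      (if Nat.eqb ((y 1 + r) mod p 1) (p 1 - 1) then gam_f (shiftf p 1) (shiftf s 1) N (sh1 (Nat.iter r (odo p) y)) else 0))).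
  2:{ intros r _. rewrite f_split, iter_1 by auto. lia. }
  rewrite nsum_add, nsum_add, nsum_const, (nsum_rot (p 1) (y 1) (s 1)).
  set (r0 := p 1 - 1 - y 1).
  rewrite (nsum_single (p 1) r0 (fun i => if Nat.eqb ((y 1 + i) mod p 1) (p 1 - 1)
     then gam_f (shiftf p 1) (shiftf s 1) N (sh1 (Nat.iter i (odo p) y)) else 0)).
  - rewrite block_pre by (auto; unfold r0; lia). rewrite Nat.mod_small by (unfold r0; lia).
    replace (y 1 + r0) with (p 1 - 1) by (unfold r0; lia). rewrite Nat.eqb_refl.
    unfold f_trunc, gam_f. lia.
  - unfold r0; lia.
  - intros r Hr Hne. destruct (Nat.eqb_spec ((y 1 + r) mod p 1) (p 1 - 1)); auto.
    exfalso. apply Hne. destruct (Nat.lt_ge_cases (y 1 + r) (p 1)).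
    + rewrite Nat.mod_small in e by lia. unfold r0; lia.
    + replace (y 1 + r) with ((y 1 + r - p 1) + 1 * p 1) in e by lia.
      rewrite Nat.Div0.mod_add, Nat.mod_small in e by lia. lia.
Qed.

Lemma one_step p s N L y : 1 <= p 1 -> y 1 < p 1 ->
  birkhoff (odo p) (f_trunc p s (S N)) (p 1 * L) y =
  L * (p 1 - 1 + nsum 0 (p 1) (s 1)) +
  birkhoff (odo (shiftf p 1)) (f_trunc (shiftf p 1) (shiftf s 1) N) L (sh1 y).
Proof.
  intros Hp. revert y. induction L; intros y Hy.
  - rewrite Nat.mul_0_r. reflexivity.
  - replace (p 1 * S L) with (p 1 + p 1 * L) by lia. rewrite birk_add.
    rewrite IHL by (rewrite block_end1; auto).
    rewrite block_end_sh by auto. rewrite birk_S.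
    unfold birkhoff at 1. rewrite block_sum by auto. lia.
Qed.

End PartD.

Section PartE.
Local Open Scope nat_scope.

Lemma q_front p n : q p (S n) = p 1 * q (shiftf p 1) n.
Proof.
  induction n. simpl. lia.
  change (q p (S (S n))) with (q p (S n) * p (S (S n))).
  rewrite IHn. change (q (shiftf p 1) (S n)) with (q (shiftf p 1) n * p (S (S n))). lia.
Qed.

Fixpoint Kc (n : nat) (p : nat -> nat) (s : nat -> nat -> nat) : nat :=
  match n with
  | O => 0
  | S n' => q (shiftf p 1) n' * (p 1 - 1 + nsum 0 (p 1) (s 1)) + Kc n' (shiftf p 1) (shiftf s 1)
  end.

Lemma hh_front p s n : 1 <= p 1 ->
  hh p s (S n) = q (shiftf p 1) n * (p 1 - 1 + nsum 0 (p 1) (s 1)) + hh (shiftf p 1) (shiftf s 1) n.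
Proof.
  intros Hp. induction n.
  - simpl. lia.
  - change (hh p s (S (S n))) with (p (S (S n)) * hh p s (S n) + nsum 0 (p (S (S n))) (s (S (S n)))).
    rewrite IHn.
    change (q (shiftf p 1) (S n)) with (q (shiftf p 1) n * p (S (S n))).
    change (hh (shiftf p 1) (shiftf s 1) (S n)) with
      (p (S (S n)) * hh (shiftf p 1) (shiftf s 1) n + nsum 0 (p (S (S n))) (s (S (S n)))).
    nia.
Qed.

Lemma Kc_hh n : forall p s, (forall m, 1 <= m <= n -> 1 <= p m) -> Kc n p s + 1 = hh p s n.
Proof.
  induction n; intros p s Hp. reflexivity.
  rewrite hh_front by (apply Hp; lia). simpl Kc.
  rewrite <- IHn. lia. intros m Hm. unfold shiftf. apply Hp; lia.
Qed.

Lemma reduce n : forall p s N j y, (forall m, 1 <= m <= n -> 1 <= p m /\ y m < p m) -> n <= N ->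
  birkhoff (odo p) (f_trunc p s N) (j * q p n) y =
  j * Kc n p s + birkhoff (odo (shiftf p n)) (f_trunc (shiftf p n) (shiftf s n) (N - n)) j (shY n y).
Proof.
  induction n; intros p s N j y Hg HN.
  - simpl q. rewrite Nat.mul_1_r, Nat.sub_0_r. simpl Kc. rewrite Nat.mul_0_r. simpl. reflexivity.
  - destruct N as [|N']; [lia|].
    rewrite q_front. replace (j * (p 1 * q (shiftf p 1) n)) with (p 1 * (j * q (shiftf p 1) n)) by lia.
    rewrite one_step by (apply Hg; lia).
    rewrite IHn.
    + simpl Kc. simpl shY. change (S N' - S n) with (N' - n). change (shiftf (shiftf p 1) n) with (shiftf p (S n)). change (shiftf (shiftf s 1) n) with (shiftf s (S n)). nia.
    + intros m Hm. unfold shiftf, sh1. simpl. destruct m; [lia|]. apply Hg. lia.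
    + lia.
Qed.

Lemma X_reduce p s n j N y : (forall m, 1 <= m <= n -> 1 <= p m /\ y m < p m) -> n <= N ->
  X_trunc p s n j N y = Z.of_nat (Gam (shiftf p n) (shiftf s n) j (N - n) (shY n y)).
Proof.
  intros Hg HN. unfold X_trunc. rewrite reduce by auto. rewrite birk_f_trunc.
  rewrite <- (Kc_hh n p s) by (intros m Hm; apply Hg; auto). unfold Gam.
  lia.
Qed.

End PartE.

Section PartF.
Local Open Scope R_scope.

Definition indR (b : bool) : R := if b then 1 else 0.
Definition agree (M : nat) (y y' : nat -> nat) : Prop := forall i, (1 <= i <= M)%nat -> y i = y' i.
Definition depR (M : nat) (F : (nat -> nat) -> R) : Prop := forall y y', agree M y y' -> F y = F y'.
Definition good (P : nat -> nat) (N : nat) (y : nat -> nat) : Prop := forall m, (1 <= m <= N)%nat -> (y m < P m)%nat.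

Lemma inv_INR_nonneg n : 0 <= / INR n.
Proof.
  destruct n. simpl. rewrite Rinv_0. lra.
  left. apply Rinv_pos. apply lt_0_INR. lia.
Qed.

Lemma avg_ext_good P N : forall F G, (forall y, good P N y -> F y = G y) -> avg P N F = avg P N G.
Proof.
  induction N; intros F G H; simpl.
  - apply H. intros m Hm; lia.
  - apply IHN. intros y Hy. f_equal. apply rsum_ext. intros a Ha. apply H.
    intros m Hm. unfold upd. destruct (Nat.eqb_spec m (S N)). subst; auto. apply Hy; lia.
Qed.

Lemma avg_ext P N F G : (forall y, F y = G y) -> avg P N F = avg P N G.
Proof. intros H; apply avg_ext_good; auto. Qed.

Lemma avg_lin P N : forall a b F G, avg P N (fun y => a * F y + b * G y) = a * avg P N F + b * avg P N G.
Proof.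
  induction N; intros a b F G; simpl. reflexivity.
  rewrite <- IHN. apply avg_ext. intros y. rewrite rsum_lin. ring.
Qed.

Lemma avg_zero P N : avg P N (fun _ => 0) = 0.
Proof.
  induction N; simpl. reflexivity. transitivity (avg P N (fun _ => 0)); auto. apply avg_ext. intros y.
  rewrite rsum_const. ring.
Qed.

Lemma avg_le P N : forall F G, (forall y, F y <= G y) -> avg P N F <= avg P N G.
Proof.
  induction N; intros F G H; simpl. apply H.
  apply IHN. intros y. apply Rmult_le_compat_l. apply inv_INR_nonneg.
  apply rsum_le. intros; apply H.
Qed.

Lemma avg_rsum P N j (F : nat -> (nat -> nat) -> R) :
  avg P N (fun y => rsum j (fun l => F l y)) = rsum j (fun l => avg P N (F l)).
Proof.
  induction j; simpl. apply avg_zero.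
  rewrite <- IHj. rewrite <- (Rmult_1_l (avg P N (F j))).
  rewrite <- (Rmult_1_l (avg P N (fun y => rsum j (fun l => F l y)))).
  rewrite <- avg_lin. apply avg_ext. intros; ring.
Qed.

Lemma avg_const P N c : (forall m, (1 <= m <= N)%nat -> (1 <= P m)%nat) -> avg P N (fun _ => c) = c.
Proof.
  induction N; intros HP; simpl. reflexivity.
  transitivity (avg P N (fun _ => c)); [|apply IHN; intros; apply HP; lia]. apply avg_ext. intros y.
  rewrite rsum_const. field. apply not_0_INR. specialize (HP (S N)). lia.
Qed.

Lemma agree_upd M y a : agree M (upd y (S M) a) y.
Proof. intros i Hi. unfold upd. destruct (Nat.eqb_spec i (S M)); auto. lia. Qed.

Lemma avg_extend P M F : depR M F -> (forall m, (1 <= m)%nat -> (1 <= P m)%nat) ->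
  forall d, avg P (d + M) F = avg P M F.
Proof.
  intros HF HP d. induction d. reflexivity.
  simpl plus. simpl avg. rewrite <- IHd. apply avg_ext. intros y.
  rewrite (rsum_ext _ _ (fun _ => F y)). rewrite rsum_const. field.
  apply not_0_INR. specialize (HP (S (d + M))). lia.
  intros a _. apply HF. intros i Hi. unfold upd. destruct (Nat.eqb_spec i (S (d+M))); auto. lia.
Qed.

Lemma odo_agree P M y y' : agree M y y' -> agree M (odo P y) (odo P y').
Proof.
  intros H i Hi. unfold odo. destruct (Nat.eqb i 0); auto.
  assert (all_max P y i = all_max P y' i).
  { apply bool_iff. rewrite !all_max_spec. split; intros G k Hk; [rewrite <- H | rewrite H]; auto; lia. }
  rewrite H0, H by lia. reflexivity.
Qed.

Lemma iter_agree P M l y y' : agree M y y' -> agree M (Nat.iter l (odo P) y) (Nat.iter l (odo P) y').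
Proof. induction l; simpl; auto. intros; apply odo_agree; auto. Qed.

Lemma avg_odo P M : forall E, depR M E -> avg P M (fun y => E (odo P y)) = avg P M E.
Proof.
  induction M; intros E HE.
  - simpl. apply HE. intros i Hi; lia.
  - simpl avg.
    set (H := fun x => / INR (P (S M)) * rsum (P (S M)) (fun a => E (upd x (S M) a))).
    transitivity (avg P M (fun y => H (odo P y))).
    + apply avg_ext. intros y. unfold H. f_equal.
      set (sig := fun a => if all_max P y (S M) then ((a + 1) mod P (S M))%nat else a).
      rewrite (rsum_ext _ _ (fun a => E (upd (odo P y) (S M) (sig a)))).
      * unfold sig. destruct (all_max P y (S M)); auto.
        apply (rsum_rot1 (P (S M)) (fun a => E (upd (odo P y) (S M) a))).
      * intros a _. apply HE. intros i Hi. unfold upd at 2.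
        destruct (Nat.eqb_spec i (S M)).
        -- subst i. unfold odo. simpl Nat.eqb.
           assert (all_max P (upd y (S M) a) (S M) = all_max P y (S M)).
           { apply bool_iff. rewrite !all_max_spec. split; intros G k Hk; specialize (G k Hk);
             unfold upd in *; destruct (Nat.eqb_spec k (S M)); auto; lia. }
           rewrite H0. unfold sig, upd. rewrite Nat.eqb_refl. reflexivity.
        -- apply odo_agree with (M := M); [apply agree_upd|lia].
    + apply IHM. intros x x' Hx. unfold H. f_equal. apply rsum_ext. intros a _. apply HE.
      intros i Hi. unfold upd. destruct (Nat.eqb_spec i (S M)); auto. apply Hx; lia.
Qed.

Lemma avg_odo_iter P M l E : depR M E -> avg P M (fun y => E (Nat.iter l (odo P) y)) = avg P M E.
Proof.
  intros HE. induction l. reflexivity.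
  rewrite <- IHl. rewrite (avg_ext _ _ _ (fun y => E (Nat.iter l (odo P) (odo P y)))).
  apply (avg_odo P M (fun y => E (Nat.iter l (odo P) y))).
  intros y y' H. apply HE. apply iter_agree; auto.
  intros y. rewrite Nat.iter_succ_r. reflexivity.
Qed.

Lemma prob_allmax P M : (forall m, (1 <= m)%nat -> (2 <= P m)%nat) ->
  avg P M (fun b => indR (all_max P b (S M))) <= (/2) ^ M.
Proof.
  intros HP. induction M.
  - simpl. lra.
  - simpl avg. apply Rle_trans with (avg P M (fun y => /2 * indR (all_max P y (S M)) + 0 * indR (all_max P y (S M)))).
    + apply avg_le. intros y.
      rewrite (rsum_ext _ _ (fun a => indR (all_max P y (S M)) * indR (Nat.eqb a (P (S M) - 1)))).
      * assert (E1 : rsum (P (S M)) (fun a => indR (Nat.eqb a (P (S M) - 1))) = 1).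
        { specialize (HP (S M) ltac:(lia)). destruct (P (S M)) as [|p'] eqn:Ep; [lia|].
          rewrite rsum_S. replace (S p' - 1)%nat with p' by lia. unfold indR at 2. rewrite Nat.eqb_refl.
          rewrite (rsum_ext _ _ (fun _ => 0)). rewrite rsum_const. lra.
          intros i Hi. unfold indR. destruct (Nat.eqb_spec i p'); auto; lia. }
        replace (rsum (P (S M)) (fun a => indR (all_max P y (S M)) * indR (a =? P (S M) - 1)%nat))
          with (indR (all_max P y (S M)) * rsum (P (S M)) (fun a => indR (a =? P (S M) - 1)%nat)).
        2:{ rewrite <- (Rplus_0_r (indR (all_max P y (S M)) * _)).
            rewrite <- (Rmult_0_l (rsum (P (S M)) (fun a => indR (a =? P (S M) - 1)%nat))).
            rewrite <- rsum_lin. apply rsum_ext. intros; ring. }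
        rewrite E1. assert (0 <= indR (all_max P y (S M)) <= 1) by (unfold indR; destruct all_max; lra).
        assert (/ INR (P (S M)) <= /2).
        { apply Rinv_le_contravar. lra. replace 2 with (INR 2) by (simpl; lra). apply le_INR. apply HP; lia. }
        nra.
      * intros a _. rewrite all_max_last by lia. unfold upd at 2. rewrite Nat.eqb_refl.
        assert (all_max P (upd y (S M) a) (S M) = all_max P y (S M)).
        { apply bool_iff. rewrite !all_max_spec. split; intros G k Hk; specialize (G k Hk);
          unfold upd in *; destruct (Nat.eqb_spec k (S M)); auto; lia. }
        rewrite H. unfold indR. destruct (all_max P y (S M)), (Nat.eqb a (P (S M) - 1)); simpl; ring.
    + rewrite avg_lin. simpl. lra.
Qed.

End PartF.

Section PartG.
Local Open Scope R_scope.

Lemma avg_shift1 P M : (1 <= P 1)%nat -> forall F, avg P (S M) (fun y => F (sh1 y)) = avg (shiftf P 1) M F.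
Proof.
  intros HP. induction M; intros F.
  - simpl. rewrite (rsum_ext _ _ (fun _ => F (fun _ => 0%nat))).
    rewrite rsum_const. field. apply not_0_INR. lia.
    intros a _. f_equal. apply functional_extensionality. intros m. unfold sh1, upd.
    destruct (Nat.eqb_spec m 0); auto. destruct (Nat.eqb_spec (S m) 1); auto. lia.
  - change (avg P (S (S M)) (fun y => F (sh1 y))) with
      (avg P (S M) (fun y => / INR (P (S (S M))) * rsum (P (S (S M))) (fun a => F (sh1 (upd y (S (S M)) a))))).
    rewrite (avg_ext _ _ _ (fun y => (fun z => / INR (shiftf P 1 (S M)) * rsum (shiftf P 1 (S M)) (fun a => F (upd z (S M) a))) (sh1 y))).
    + exact (IHM (fun z => / INR (shiftf P 1 (S M)) * rsum (shiftf P 1 (S M)) (fun a => F (upd z (S M) a)))).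
    + intros y. simpl. f_equal. apply rsum_ext. intros a _. f_equal.
      apply functional_extensionality. intros m. unfold sh1, upd.
      destruct m; simpl; auto.
Qed.

Lemma avg_shiftn n : forall P M F, (forall m, (1 <= m <= n)%nat -> (1 <= P m)%nat) ->
  avg P (n + M) (fun y => F (shY n y)) = avg (shiftf P n) M F.
Proof.
  induction n; intros P M F HP. reflexivity.
  change (avg P (S (n + M)) (fun y => F (shY n (sh1 y))) = avg (shiftf P (S n)) M F).
  rewrite (avg_shift1 P (n + M) ltac:(apply HP; lia) (fun z => F (shY n z))).
  rewrite IHn. reflexivity. intros m Hm. unfold shiftf. apply HP. lia.
Qed.

Lemma avg_param P P' N : forall F, (forall m, (1 <= m <= N)%nat -> P m = P' m) -> avg P N F = avg P' N F.
Proof.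
  induction N; intros F H; simpl; auto. rewrite (H (S N)) by lia. apply IHN. intros; apply H; lia.
Qed.

Lemma smorse_agree P Sf m M x x' : (1 <= m <= M)%nat -> agree M x x' -> smorse P Sf m x = smorse P Sf m x'.
Proof.
  intros Hm H. unfold smorse.
  assert (all_max P x m = all_max P x' m).
  { apply bool_iff. rewrite !all_max_spec. split; intros G k Hk; [rewrite <- H | rewrite H]; auto; lia. }
  rewrite H0. rewrite H by lia. reflexivity.
Qed.

Lemma gam_f_agree P Sf M x x' : agree M x x' -> gam_f P Sf M x = gam_f P Sf M x'.
Proof. intros H. unfold gam_f. apply nsum_ext. intros i Hi. apply smorse_agree with M; auto; lia. Qed.

Lemma Gam_agree P Sf j M y y' : agree M y y' -> Gam P Sf j M y = Gam P Sf j M y'.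
Proof.
  intros H. unfold Gam, birkhoff. apply nsum_ext. intros i _. apply gam_f_agree. apply iter_agree; auto.
Qed.

Lemma gam_f_trunc P Sf M N x : all_max P x (S M) = false -> (M <= N)%nat -> gam_f P Sf N x = gam_f P Sf M x.
Proof.
  intros Hx HN. induction HN. reflexivity.
  unfold gam_f in *. rewrite nsum_S_r, IHHN. unfold smorse.
  destruct (all_max P x (1 + m)) eqn:E. 2: lia.
  apply (all_max_mono P x (S M)) in E. congruence. lia.
Qed.

Lemma Gam_trunc P Sf j M N b : (forall l, (l < j)%nat -> all_max P (Nat.iter l (odo P) b) (S M) = false) ->
  (M <= N)%nat -> Gam P Sf j N b = Gam P Sf j M b.
Proof.
  intros H HN. unfold Gam, birkhoff. apply nsum_ext. intros i Hi. apply gam_f_trunc; auto. apply H. lia.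
Qed.

Lemma odo_param P P' M x : (forall m, (1 <= m <= M)%nat -> P m = P' m) -> agree M (odo P x) (odo P' x).
Proof.
  intros H i Hi. unfold odo. destruct (Nat.eqb i 0); auto.
  assert (all_max P x i = all_max P' x i).
  { apply bool_iff. rewrite !all_max_spec. split; intros G k Hk; [rewrite <- H | rewrite H]; auto; lia. }
  rewrite H0, H by lia. reflexivity.
Qed.

Lemma odo_good P M x : (forall m, (1 <= m <= M)%nat -> (1 <= P m)%nat) -> good P M x -> good P M (odo P x).
Proof.
  intros HP H m Hm. unfold odo. destruct (Nat.eqb_spec m 0). lia.
  destruct (all_max P x m). apply Nat.mod_upper_bound. specialize (HP m Hm). lia. apply H; auto.
Qed.

Lemma agree_trans M x y z : agree M x y -> agree M y z -> agree M x z.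
Proof. intros H1 H2 i Hi. rewrite H1, H2; auto. Qed.

Lemma Gam_param P P' Sf Sf' j M b :
  (forall m, (1 <= m <= M)%nat -> (1 <= P m)%nat) ->
  (forall m, (1 <= m <= M)%nat -> P m = P' m) ->
  (forall m a, (1 <= m <= M)%nat -> (a < P m)%nat -> Sf m a = Sf' m a) ->
  good P M b -> Gam P Sf j M b = Gam P' Sf' j M b.
Proof.
  intros HP1 HP HS Hb. unfold Gam, birkhoff. apply nsum_ext. intros l _.
  assert (A : agree M (Nat.iter l (odo P) b) (Nat.iter l (odo P') b) /\ good P M (Nat.iter l (odo P) b)).
  { induction l. split; auto. intros i _; auto.
    destruct IHl as [IH1 IH2]. simpl. split.
    - apply agree_trans with (odo P (Nat.iter l (odo P') b)). apply odo_agree; auto. apply odo_param; auto.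
    - apply odo_good; auto. }
  destruct A as [A1 A2]. set (x := Nat.iter l (odo P) b) in *. set (x' := Nat.iter l (odo P') b) in *.
  unfold gam_f. apply nsum_ext. intros m Hm. unfold smorse.
  assert (all_max P x m = all_max P' x' m).
  { apply bool_iff. rewrite !all_max_spec. split; intros G k Hk; specialize (G k Hk).
    - rewrite <- A1, <- HP by lia. auto.
    - rewrite A1, HP by lia. auto. }
  rewrite H. destruct (all_max P' x' m); auto. rewrite <- A1 by lia. apply HS. lia. apply A2. lia.
Qed.

Lemma Rabs_le_inv x a : Rabs x <= a -> -a <= x <= a.
Proof. unfold Rabs. destruct (Rcase_abs x); intros; lra. Qed.

Definition Qm P Sf j M z := prob P M (fun b => Z.eqb (Z.of_nat (Gam P Sf j M b)) z).

Lemma Qm_param P P' Sf Sf' j M z :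
  (forall m, (1 <= m <= M)%nat -> (1 <= P m)%nat) ->
  (forall m, (1 <= m <= M)%nat -> P m = P' m) ->
  (forall m a, (1 <= m <= M)%nat -> (a < P m)%nat -> Sf m a = Sf' m a) ->
  Qm P Sf j M z = Qm P' Sf' j M z.
Proof.
  intros H1 H2 H3. unfold Qm, prob. rewrite (avg_param P P' M); auto.
  apply avg_ext_good. intros y Hy. rewrite (Gam_param P' P Sf' Sf); auto.
  - intros m Hm; rewrite <- H2; auto.
  - intros m Hm; rewrite H2; auto.
  - intros m a Hm Ha. symmetry. apply H3; auto. rewrite H2; auto.
Qed.

Lemma Qm_cauchy P Sf j M N z : (forall m, (1 <= m)%nat -> (2 <= P m)%nat) -> (M <= N)%nat ->
  Rabs (Qm P Sf j N z - Qm P Sf j M z) <= INR j * (/2) ^ M.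
Proof.
  intros HP HMN. unfold Qm, prob.
  set (EN := fun b => if Z.eqb (Z.of_nat (Gam P Sf j N b)) z then 1 else 0).
  set (EM := fun b => if Z.eqb (Z.of_nat (Gam P Sf j M b)) z then 1 else 0).
  set (Aev := fun l b => indR (all_max P (Nat.iter l (odo P) b) (S M))).
  assert (HP1 : forall m, (1 <= m)%nat -> (1 <= P m)%nat) by (intros m Hm; specialize (HP m Hm); lia).
  assert (depEM : depR M EM).
  { intros y y' H. unfold EM. rewrite (Gam_agree P Sf j M y y' H). reflexivity. }
  assert (depA : forall l, depR M (Aev l)).
  { intros l y y' H. unfold Aev. f_equal. apply bool_iff. rewrite !all_max_spec.
    pose proof (iter_agree P M l y y' H) as H'.
    split; intros G k Hk; [rewrite <- H' | rewrite H']; auto; lia. }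
  replace (avg P M EM) with (avg P N EM).
  2:{ replace N with ((N - M) + M)%nat by lia. apply avg_extend; auto. }
  assert (Hpt : forall b, Rabs (EN b - EM b) <= rsum j (fun l => Aev l b)).
  { intros b.
    assert (Hnn : forall k, (k < j)%nat -> 0 <= Aev k b) by (intros; unfold Aev, indR; destruct all_max; lra).
    destruct (existsb (fun l => all_max P (Nat.iter l (odo P) b) (S M)) (seq 0 j)) eqn:Ex.
    - apply existsb_exists in Ex. destruct Ex as [l [Hl1 Hl2]]. apply in_seq in Hl1.
      apply Rle_trans with (Aev l b). unfold Aev. rewrite Hl2. unfold indR, EN, EM.
      destruct Z.eqb, Z.eqb; rewrite ?Rminus_diag, ?Rabs_R0; try (rewrite Rabs_right; lra); try (rewrite Rabs_left; lra); lra.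
      apply (rsum_ge_term j (fun l => Aev l b) l); auto. lia.
    - unfold EN, EM. rewrite (Gam_trunc P Sf j M N b); auto.
      rewrite Rminus_diag, Rabs_R0.
      apply Rle_trans with (rsum j (fun _ => 0)). rewrite rsum_const; lra. apply rsum_le; auto.
      intros l Hl. destruct (all_max P (Nat.iter l (odo P) b) (S M)) eqn:E; auto.
      assert (existsb (fun l => all_max P (Nat.iter l (odo P) b) (S M)) (seq 0 j) = true).
      { apply existsb_exists. exists l. split; auto. apply in_seq. lia. }
      congruence. }
  assert (Hb : avg P N (fun b => rsum j (fun l => Aev l b)) <= INR j * (/2) ^ M).
  { rewrite avg_rsum.
    apply Rle_trans with (rsum j (fun _ => (/2) ^ M)). 2: rewrite rsum_const; lra.
    apply rsum_le. intros l Hl.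
    replace N with ((N - M) + M)%nat by lia. rewrite avg_extend; auto.
    unfold Aev. rewrite (avg_odo_iter P M l (fun b => indR (all_max P b (S M)))).
    apply prob_allmax; auto.
    intros y y' H. f_equal. apply bool_iff. rewrite !all_max_spec.
    split; intros G k Hk; [rewrite <- H | rewrite H]; auto; lia. }
  replace (avg P N EN - avg P N EM) with (avg P N (fun b => 1 * EN b + (-1) * EM b)).
  2:{ rewrite avg_lin. ring. }
  apply Rabs_le. split.
  - apply Rle_trans with (- avg P N (fun b => rsum j (fun l => Aev l b))). lra.
    rewrite <- (Rplus_0_r (- _)). rewrite <- (Rmult_0_l (avg P N EN)).
    replace (- avg P N (fun b => rsum j (fun l => Aev l b))) with ((-1) * avg P N (fun b => rsum j (fun l => Aev l b))) by ring.
    rewrite <- avg_lin. apply avg_le. intros b. specialize (Hpt b). apply Rabs_le_inv in Hpt. lra.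
  - apply Rle_trans with (avg P N (fun b => rsum j (fun l => Aev l b))); auto.
    apply avg_le. intros b. specialize (Hpt b). apply Rabs_le_inv in Hpt. lra.
Qed.

End PartG.

Section PartH.
Local Open Scope R_scope.

Lemma lim_lemma (u : nat -> R) M0 c :
  (forall M N, (M0 <= M <= N)%nat -> Rabs (u N - u M) <= c * (/2) ^ (M - M0)) ->
  exists l, Un_cv u l /\ forall M, (M0 <= M)%nat -> Rabs (l - u M) <= c * (/2) ^ (M - M0).
Proof.
  intros H.
  assert (Hc : 0 <= c). { specialize (H M0 M0 ltac:(lia)). rewrite Rminus_diag, Rabs_R0, Nat.sub_diag in H. simpl in H. lra. }
  assert (Hpos : forall k, 0 < (/2) ^ k) by (intros; apply pow_lt; lra).
  assert (Hsmall : forall eps, eps > 0 -> exists K, forall k, (k >= K)%nat -> c * (/2) ^ k < eps).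
  { intros eps He. destruct (pow_lt_1_zero (/2) ltac:(rewrite Rabs_right; lra) (eps / (c + 1)) ltac:(apply Rdiv_lt_0_compat; lra)) as [K HK].
    exists K. intros k Hk. specialize (HK k Hk). rewrite Rabs_right in HK by (left; apply Hpos).
    apply Rle_lt_trans with ((c+1) * (/2)^k). specialize (Hpos k). nra.
    apply Rmult_lt_reg_l with (/ (c+1)). apply Rinv_pos; lra.
    rewrite <- Rmult_assoc, Rinv_l by lra. unfold Rdiv in HK. lra. }
  assert (Hcau : Cauchy_crit u).
  { intros eps He. destruct (Hsmall eps He) as [K HK]. exists (M0 + K)%nat. intros n m Hn Hm.
    unfold Rdist. destruct (Nat.le_ge_cases n m).
    - rewrite Rabs_minus_sym. eapply Rle_lt_trans. apply H. lia. apply HK. lia.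
    - eapply Rle_lt_trans. apply H. lia. apply HK. lia. }
  destruct (R_complete u Hcau) as [l Hl]. exists l. split; auto.
  intros M HM. apply Rle_plus_epsilon. intros eps He.
  destruct (Hl eps He) as [N1 HN1]. set (n := Nat.max N1 M).
  specialize (HN1 n ltac:(unfold n; lia)). unfold Rdist in HN1.
  specialize (H M n ltac:(unfold n; lia)).
  replace (l - u M) with ((l - u n) + (u n - u M)) by ring.
  eapply Rle_trans. apply Rabs_triang. rewrite Rabs_minus_sym. lra.
Qed.

Lemma prob_X p s n j z M : (forall m, (1 <= m)%nat -> (2 <= p m)%nat) ->
  prob p (n + M) (fun y => Z.eqb (X_trunc p s n j (n + M) y) z) = Qm (shiftf p n) (shiftf s n) j M z.
Proof.
  intros Hp. unfold prob, Qm.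
  rewrite (avg_ext_good p (n + M) _ (fun y => (fun b => if Z.eqb (Z.of_nat (Gam (shiftf p n) (shiftf s n) j M b)) z then 1 else 0) (shY n y))).
  - exact (avg_shiftn n p M (fun b => if Z.eqb (Z.of_nat (Gam (shiftf p n) (shiftf s n) j M b)) z then 1 else 0) ltac:(intros m Hm; specialize (Hp m ltac:(lia)); lia)).
  - intros y Hy. rewrite X_reduce. replace (n + M - n)%nat with M by lia. reflexivity.
    intros m Hm. split. specialize (Hp m ltac:(lia)); lia. apply Hy; lia. lia.
Qed.

Lemma mu_ex p s n j z : (forall m, (1 <= m)%nat -> (2 <= p m)%nat) ->
  exists l, Un_cv (fun N => prob p N (fun y => Z.eqb (X_trunc p s n j N y) z)) l /\
    forall M, Rabs (l - Qm (shiftf p n) (shiftf s n) j M z) <= INR j * (/2) ^ M.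
Proof.
  intros Hp.
  assert (Hp' : forall m, (1 <= m)%nat -> (2 <= shiftf p n m)%nat) by (intros; unfold shiftf; apply Hp; lia).
  destruct (lim_lemma (fun N => prob p N (fun y => Z.eqb (X_trunc p s n j N y) z)) n (INR j)) as [l [H1 H2]].
  - intros M N HMN. replace M with (n + (M - n))%nat by lia. replace N with (n + (N - n))%nat by lia.
    rewrite !prob_X by auto. replace (n + (M - n) - n)%nat with (M - n)%nat by lia.
    apply Qm_cauchy; auto. lia.
  - exists l. split; auto. intros M. specialize (H2 (n + M)%nat ltac:(lia)).
    rewrite prob_X in H2 by auto. replace (n + M - n)%nat with M in H2 by lia. auto.
Qed.

Lemma P_ex pi eta j z : (forall m, (1 <= m)%nat -> (2 <= pibar pi m)%nat) ->
  exists l, Un_cv (fun N => prob (pibar pi) N (fun y => Z.eqb (Gamma_trunc pi eta j N y) z)) l /\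
    forall M, Rabs (l - Qm (pibar pi) (etabar eta) j M z) <= INR j * (/2) ^ M.
Proof.
  intros Hp.
  destruct (lim_lemma (fun N => Qm (pibar pi) (etabar eta) j N z) 0 (INR j)) as [l [H1 H2]].
  - intros M N HMN. rewrite Nat.sub_0_r. apply Qm_cauchy; auto. lia.
  - exists l. split; auto. intros M. specialize (H2 M ltac:(lia)). rewrite Nat.sub_0_r in H2. auto.
Qed.

End PartH.


Lemma unifK (p : nat -> nat) (s : nat -> nat -> nat) (nk : nat -> nat)
  (pi : Z -> nat) (eta : Z -> nat -> nat) :
  (forall m : Z, exists K, forall k, (K <= k)%nat ->
      (1 <= Z.of_nat (nk k) + m)%Z /\ p (Z.to_nat (Z.of_nat (nk k) + m)) = pi m) ->
  (forall (m : Z) (j : nat), (j < pi m)%nat -> exists K, forall k, (K <= k)%nat ->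
      (1 <= Z.of_nat (nk k) + m)%Z /\ s (Z.to_nat (Z.of_nat (nk k) + m)) j = eta m j) ->
  forall M, exists K, forall k, (K <= k)%nat ->
    (forall m, (1 <= m <= M)%nat -> shiftf p (nk k) m = pibar pi m) /\
    (forall m a, (1 <= m <= M)%nat -> (a < shiftf p (nk k) m)%nat -> shiftf s (nk k) m a = etabar eta m a).
Proof.
  intros Hpi Heta. induction M.
  - exists 0%nat. intros k _. split; intros; lia.
  - destruct IHM as [K1 HK1]. destruct (Hpi (Z.of_nat (S M))) as [K2 HK2].
    assert (Hconv : forall k, Z.to_nat (Z.of_nat (nk k) + Z.of_nat (S M)) = (nk k + S M)%nat).
    { intros k. rewrite <- Nat2Z.inj_add, Nat2Z.id. reflexivity. }
    assert (Hb : forall b, exists K, forall k, (K <= k)%nat -> forall a, (a < b)%nat -> (a < pi (Z.of_nat (S M)))%nat ->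
              s (nk k + S M)%nat a = eta (Z.of_nat (S M)) a).
    { induction b.
      - exists 0%nat. intros; lia.
      - destruct IHb as [Kb HKb]. destruct (Nat.lt_ge_cases b (pi (Z.of_nat (S M)))) as [Hlt|Hge].
        + destruct (Heta (Z.of_nat (S M)) b Hlt) as [Kc HKc]. exists (Nat.max Kb Kc). intros k Hk a Ha Ha2.
          destruct (Nat.eq_dec a b). subst a. destruct (HKc k ltac:(lia)) as [_ E]. rewrite Hconv in E. auto.
          apply HKb; auto; lia.
        + exists Kb. intros k Hk a Ha Ha2. apply HKb; auto; lia. }
    destruct (Hb (pi (Z.of_nat (S M)))) as [K3 HK3].
    exists (Nat.max K1 (Nat.max K2 K3)). intros k Hk.
    destruct (HK1 k ltac:(lia)) as [A1 A2].
    destruct (HK2 k ltac:(lia)) as [_ B]. rewrite Hconv in B.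
    split.
    + intros m Hm. destruct (Nat.eq_dec m (S M)). subst m. unfold shiftf, pibar. auto. apply A1; lia.
    + intros m a Hm Ha. destruct (Nat.eq_dec m (S M)).
      * subst m. unfold shiftf, etabar. unfold shiftf in Ha. apply HK3; [lia| rewrite <- B; auto | rewrite <- B; auto].
      * apply A2; auto. lia.
Qed.

Theorem mainTheorem15
  (p : nat -> nat) (s : nat -> nat -> nat) (nk : nat -> nat)
  (pi : Z -> nat) (eta : Z -> nat -> nat) :
  (forall n, (1 <= n)%nat -> (2 <= p n)%nat) ->
  (* integrability of f = 1 + sum_n s_n *)
  (exists B : R, forall N : nat,
      rsum N (fun i => INR (nsum 0 (p (S i)) (s (S i))) / INR (q p (S i))) <= B) ->
  (* (n_k) is a stabilizing subsequence with limit parameters pi, eta *)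
  (forall k, (nk k < nk (S k))%nat) ->
  (forall m : Z, exists K, forall k, (K <= k)%nat ->
      (1 <= Z.of_nat (nk k) + m)%Z /\ p (Z.to_nat (Z.of_nat (nk k) + m)) = pi m) ->
  (forall (m : Z) (j : nat), (j < pi m)%nat -> exists K, forall k, (K <= k)%nat ->
      (1 <= Z.of_nat (nk k) + m)%Z /\ s (Z.to_nat (Z.of_nat (nk k) + m)) j = eta m j) ->
  forall j : nat, (1 <= j)%nat ->
  exists (mu : nat -> Z -> R) (P : Z -> R),
    (* mu k z = nu( f^{(j q_{n_k})} - j h_{n_k+1} = z ) *)
    (forall k z, Un_cv (fun N => prob p N
        (fun y => Z.eqb (X_trunc p s (nk k) j N y) z)) (mu k z)) /\
    (* P z = P_j({z}) = nubar( gamma + ... + gamma o Sbar^{j-1} = z ) *)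
    (forall z, Un_cv (fun N => prob (pibar pi) N
        (fun y => Z.eqb (Gamma_trunc pi eta j N y) z)) (P z)) /\
    (* weak convergence of probabilities on Z: pointwise convergence of masses *)
    (forall z, Un_cv (fun k => mu k z) (P z)).
Proof.
  intros Hp _ _ Hpi Heta j Hj.
  assert (Hpb : forall m, (1 <= m)%nat -> (2 <= pibar pi m)%nat).
  { intros m Hm. destruct (Hpi (Z.of_nat m)) as [K HK]. destruct (HK K ltac:(lia)) as [_ E].
    unfold pibar. rewrite <- E. apply Hp. rewrite <- Nat2Z.inj_add, Nat2Z.id. lia. }
  assert (H1 : forall k z, exists l, Un_cv (fun N => prob p N (fun y => Z.eqb (X_trunc p s (nk k) j N y) z)) l /\
    forall M, Rabs (l - Qm (shiftf p (nk k)) (shiftf s (nk k)) j M z) <= INR j * (/2) ^ M).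
  { intros; apply mu_ex; auto. }
  assert (H2 : forall z, exists l, Un_cv (fun N => prob (pibar pi) N (fun y => Z.eqb (Gamma_trunc pi eta j N y) z)) l /\
    forall M, Rabs (l - Qm (pibar pi) (etabar eta) j M z) <= INR j * (/2) ^ M).
  { intros; apply P_ex; auto. }
  set (mu := fun k z => proj1_sig (constructive_indefinite_description _ (H1 k z))).
  set (P := fun z => proj1_sig (constructive_indefinite_description _ (H2 z))).
  assert (Hmu : forall k z, Un_cv (fun N => prob p N (fun y => Z.eqb (X_trunc p s (nk k) j N y) z)) (mu k z) /\
    forall M, Rabs (mu k z - Qm (shiftf p (nk k)) (shiftf s (nk k)) j M z) <= INR j * (/2) ^ M).
  { intros k z. unfold mu. destruct (constructive_indefinite_description _ (H1 k z)). simpl. auto. }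
  assert (HP : forall z, Un_cv (fun N => prob (pibar pi) N (fun y => Z.eqb (Gamma_trunc pi eta j N y) z)) (P z) /\
    forall M, Rabs (P z - Qm (pibar pi) (etabar eta) j M z) <= INR j * (/2) ^ M).
  { intros z. unfold P. destruct (constructive_indefinite_description _ (H2 z)). simpl. auto. }
  exists mu, P. split; [intros; apply Hmu|]. split; [intros; apply HP|].
  intros z eps He.
  destruct (pow_lt_1_zero (/2) ltac:(rewrite Rabs_right; lra) (eps / (2 * INR j + 1)) ltac:(apply Rdiv_lt_0_compat; [lra| pose proof (pos_INR j); lra])) as [M HM].
  specialize (HM M ltac:(lia)). rewrite Rabs_right in HM by (left; apply pow_lt; lra).
  assert (Hsm : 2 * (INR j * (/2) ^ M) < eps).
  { pose proof (pos_INR j). pose proof (pow_lt (/2) M ltac:(lra)).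
    apply Rmult_lt_compat_l with (r := 2 * INR j + 1) in HM; [|lra].
    unfold Rdiv in HM. rewrite <- Rmult_assoc, (Rmult_comm (2 * INR j + 1) eps), Rmult_assoc, Rinv_r in HM by lra. nra. }
  destruct (unifK p s nk pi eta Hpi Heta M) as [K HK].
  exists K. intros k Hk. unfold Rdist. destruct (HK k ltac:(lia)) as [A1 A2].
  assert (EQ : Qm (shiftf p (nk k)) (shiftf s (nk k)) j M z = Qm (pibar pi) (etabar eta) j M z).
  { apply Qm_param; auto. intros m Hm. unfold shiftf. specialize (Hp (nk k + m)%nat ltac:(lia)). lia. }
  destruct (Hmu k z) as [_ B1]. destruct (HP z) as [_ B2]. specialize (B1 M). specialize (B2 M).
  rewrite EQ in B1.
  replace (mu k z - P z) with ((mu k z - Qm (pibar pi) (etabar eta) j M z) - (P z - Qm (pibar pi) (etabar eta) j M z)) by ring.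
  eapply Rle_lt_trans. apply Rabs_triang. rewrite Rabs_Ropp. lra.
Qed.
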